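(* Let $\mathbf A\in\mathbb C^{m\times m}$ with $\operatorname{Ind}\mathbf A=k$ and $\operatorname{rank}\mathbf A^{k+1}=\operatorname{rank}\mathbf A^{k}=r\le m$, let $\mathbf B\in\mathbb C^{n\times m}$, and let $\check{\mathbf B}=\mathbf B\mathbf A^{k}$ with $i$-th row $\check{\mathbf b}_{i.}$. Then the Drazin inverse solution $\mathbf X=\mathbf B\mathbf A^{D}=(x_{ij})\in\mathbb C^{n\times m}$ of $\mathbf X\mathbf A=\mathbf B$ satisfies, for all $i=1,\dots,n$, $j=1,\dots,m$, \[x_{ij}=\frac{\sum_{\alpha\in I_{r,m}\{j\}}\left|\left(\mathbf A^{k+1}_{j.}(\check{\mathbf b}_{i.})\right)^{\alpha}_{\alpha}\right|}{\sum_{\alpha\in I_{r,m}}\left|(\mathbf A^{k+1})^{\alpha}_{\alpha}\right|}.\]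
   Context: $\operatorname{Ind}\mathbf A$ is the smallest nonnegative $k$ with $\operatorname{rank}\mathbf A^{k+1}=\operatorname{rank}\mathbf A^{k}$; the Drazin inverse $\mathbf A^{D}$ is the unique $\mathbf X$ with $\mathbf A^{k+1}\mathbf X=\mathbf A^{k}$, $\mathbf X\mathbf A\mathbf X=\mathbf X$, $\mathbf A\mathbf X=\mathbf X\mathbf A$. $\mathbf M_{j.}(\mathbf c)$ denotes $\mathbf M$ with its $j$-th row replaced by the row vector $\mathbf c$. $I_{r,m}$ is the set of strictly increasing sequences of $r$ elements of $\{1,\dots,m\}$, $I_{r,m}\{j\}=\{\alpha\in I_{r,m}:j\in\alpha\}$, $\mathbf M^{\alpha}_{\alpha}$ is the principal submatrix indexed by $\alpha$, $|\cdot|$ is the determinant. *)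

(* Defs.v *)
From mathcomp Require Import all_boot all_order all_algebra.
Set Implicit Arguments. Unset Strict Implicit. Unset Printing Implicit Defensive.
Import GRing.Theory Num.Theory.
Local Open Scope ring_scope.

Definition is_index (F : fieldType) (m : nat) (A : 'M[F]_m) (k : nat) : Prop :=
  \rank (A ^+ k.+1) = \rank (A ^+ k) /\
  (forall j : nat, (j < k)%N -> \rank (A ^+ j.+1) <> \rank (A ^+ j)).

Definition is_drazin (F : fieldType) (m : nat) (A : 'M[F]_m) (k : nat)
    (X : 'M[F]_m) : Prop :=
  A ^+ k.+1 *m X = A ^+ k /\ X *m A *m X = X /\ A *m X = X *m A.

Definition row_repl (F : fieldType) (m : nat) (M : 'M[F]_m) (j : 'I_m)
    (c : 'rV[F]_m) : 'M[F]_m :=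
  \matrix_(i, l) (if i == j then c 0 l else M i l).

(* |M^alpha_alpha| : determinant of the principal submatrix of M indexed by
   the set alpha (rows/columns taken in increasing order). *)
Definition pminor (F : fieldType) (m : nat) (M : 'M[F]_m) (alpha : {set 'I_m}) : F :=
  \det (\matrix_(i < #|alpha|, l < #|alpha|)
          M (@enum_val _ (pred_of_set alpha) i) (@enum_val _ (pred_of_set alpha) l)).

(* Main.v *)
Require Import Defs.
From mathcomp Require Import all_boot all_order all_algebra all_fingroup.
Set Implicit Arguments. Unset Strict Implicit. Unset Printing Implicit Defensive.
Import GRing.Theory Num.Theory.
Local Open Scope ring_scope.


Lemma det_mul_expand (R : fieldType) r m (A : 'M[R]_(r, m)) (B : 'M[R]_(m, r)) :
  \det (A *m B) = \sum_(f : {ffun 'I_r -> 'I_m})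
      \det (\matrix_(i, j) B (f i) j) * \prod_i A i (f i).
Proof.
pose AB (s : 'S_r) i j := A i j * B j (s i).
transitivity (\sum_(f : {ffun 'I_r -> 'I_m}) \sum_(s : 'S_r) (-1) ^+ s * \prod_i AB s i (f i)).
  rewrite exchange_big; apply: eq_bigr => /= s _.
  rewrite -big_distrr /=. congr (_ * _); rewrite -(bigA_distr_bigA (AB s)) /=.
  by apply: eq_bigr => x _; rewrite mxE.
apply: eq_bigr => f _.
rewrite big_distrl /=; apply: eq_bigr => s _.
rewrite big_split /= mulrA mulrAC; congr (_ * _ * _).
by apply: eq_bigr => x _; rewrite mxE.
Qed.

Lemma det_rowsub_noninj (R : fieldType) r m (F : 'M[R]_(m, r)) (f : {ffun 'I_r -> 'I_m}) :
  #|f @: [set: 'I_r]| != r -> \det (\matrix_(i, j) F (f i) j) = 0.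
Proof.
move=> H.
have /injectivePn [i1 [i2 ne e]] : ~~ injectiveb f.
  apply/injectiveP => inj; move: H; rewrite card_imset // cardsT card_ord eqxx //.
by apply: (determinant_alternate ne) => j; rewrite !mxE e.
Qed.

Lemma class_sum (R : fieldType) m n (F : 'M[R]_(m, n)) (G : 'M[R]_(n, m)) (a : {set 'I_m}) :
  #|a| = n ->
  \sum_(f : {ffun 'I_n -> 'I_m} | f @: [set: 'I_n] == a)
     \det (\matrix_(i, j) F (f i) j) * \prod_i G i (f i) = pminor (F *m G) a.
Proof.
move=> e; subst n.
pose ev := @enum_val _ (pred_of_set a).
pose h (s : 'S_#|a|) : {ffun 'I_#|a| -> 'I_m} := [ffun i => ev (s i)].
have imh : forall s, h s @: [set: 'I_#|a|] = a.
  move=> s; apply/setP => y; apply/imsetP/idP.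
    by case=> x _ ->; rewrite ffunE; exact: enum_valP.
  move=> ya; exists (s^-1 (enum_rank_in ya y))%g; first by rewrite inE.
  by rewrite ffunE permKV /ev enum_rankK_in.
rewrite (reindex h); last first.
  exists (fun f : {ffun 'I_#|a| -> 'I_m} => insubd (1%g : 'S_#|a|) [ffun i => enum_rank_in (enum_valP i) (f i)]).
    move=> s _.
    have -> : [ffun i => enum_rank_in (enum_valP i) (h s i)] = val s.
      apply/ffunP => i; rewrite !ffunE.
      by rewrite enum_valK_in -pvalE.
    apply: val_inj; rewrite /= insubdK //; exact: (valP s).
  move=> f; rewrite inE => /eqP fa.
  have fin : forall i, f i \in a by move=> i; move: (imset_f f (in_setT i)); rewrite fa.
  have /imset_injP injf : #|f @: [set: 'I_#|a|]| == #|[set: 'I_#|a|]|.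
    by rewrite fa cardsT card_ord.
  set g := [ffun i => _].
  have ginj : injectiveb g.
    apply/injectiveP => x y; rewrite !ffunE => /(congr1 ev).
    rewrite /ev !enum_rankK_in // => /injf; apply; exact: in_setT.
  apply/ffunP => i; rewrite ffunE /=.
  rewrite -pvalE insubdK ?ffunE /ev ?enum_rankK_in //.
rewrite (eq_bigl xpredT) => [|s]; last by rewrite imh eqxx.
pose Fa := \matrix_(i, j) F (ev i) j : 'M_#|a|.
pose Ga := \matrix_(i, j) G i (ev j) : 'M_#|a|.
transitivity (\sum_(s : 'S_#|a|) \det Fa * ((-1) ^+ s * \prod_i Ga i (s i))).
  apply: eq_bigr => s _.
  have -> : \matrix_(i, j) F (h s i) j = row_perm s Fa.
    by apply/matrixP => i j; rewrite !mxE ffunE.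
  rewrite row_permE det_mulmx det_perm mulrA [_ * \det Fa]mulrC -mulrA.
  by rewrite -mulrA; congr (_ * (_ * _)); apply: eq_bigr => i _; rewrite !mxE ffunE.
rewrite -big_distrr /= /pminor.
have -> : \matrix_(i, l) (F *m G) (enum_val i) (enum_val l) = Fa *m Ga.
  by apply/matrixP => i l; rewrite !mxE; apply: eq_bigr => k _; rewrite !mxE.
by rewrite det_mulmx.
Qed.

Lemma sum_pminor_mul (R : fieldType) m r (F : 'M[R]_(m, r)) (G : 'M[R]_(r, m)) :
  \sum_(a : {set 'I_m} | #|a| == r) pminor (F *m G) a = \det (G *m F).
Proof.
rewrite det_mul_expand (partition_big (fun f : {ffun 'I_r -> 'I_m} => f @: [set: 'I_r]) xpredT) //.
rewrite [RHS](bigID (fun a : {set 'I_m} => #|a| == r)) /= [X in _ = _ + X]big1 ?addr0.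
  by apply: eq_bigr => a /eqP e; rewrite -(class_sum F G e).
move=> a ne; apply: big1 => f /eqP fa.
by rewrite det_rowsub_noninj ?mul0r // fa.
Qed.

Lemma pminor_lin (R : fieldType) m (P Q S : 'M[R]_m) (j : 'I_m) (a : {set 'I_m}) :
  (forall x, x != j -> P x =1 Q x) -> (forall x, x != j -> S x =1 Q x) ->
  (P j =1 fun l => Q j l + S j l) ->
  pminor P a = pminor Q a + (if j \in a then pminor S a else 0).
Proof.
move=> hP hS hj; rewrite /pminor; case: ifP => ja; last first.
  rewrite addr0; congr (\det _); apply/matrixP => x y; rewrite !mxE hP //.
  by apply/eqP => e; move: (enum_valP x); rewrite e ja.
set i0 := enum_rank_in ja j.
have ej : enum_val i0 = j by rewrite enum_rankK_in.
have nl : forall x, enum_val (lift i0 x) != j.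
  move=> x; apply/eqP => e; have : lift i0 x = i0 by apply: enum_val_inj; rewrite e ej.
  by move/eqP; rewrite eq_sym (negbTE (neq_lift _ _)).
rewrite (@determinant_multilinear _ _ _
  (\matrix_(i, l) Q (enum_val i) (enum_val l)) (\matrix_(i, l) S (enum_val i) (enum_val l)) i0 1 1) ?mul1r //.
- by apply/rowP => y; rewrite !scale1r !mxE ej hj.
- by apply/matrixP => x y; rewrite !mxE hP.
- by apply/matrixP => x y; rewrite !mxE hP // hS.
Qed.

Lemma det1_rank1 (R : fieldType) n (u : 'cV[R]_n) (v : 'rV[R]_n) :
  \det (1%:M + u *m v) = 1 + (v *m u) 0 0.
Proof.
pose P1 := block_mx (1%:M : 'M_n) 0 v (1%:M : 'M_1).
pose P2 := block_mx (1%:M + u *m v) u 0 (1%:M : 'M_1).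
pose P3 := block_mx (1%:M : 'M_n) 0 (- v) (1%:M : 'M_1).
have E : P1 *m P2 *m P3 = block_mx 1%:M u 0 (1%:M + v *m u).
  rewrite /P1 /P2 /P3 !mulmx_block !mul1mx !mul0mx !mulmx1 !mulmx0 !addr0 !add0r.
  rewrite !mulmxN !mulmxDl !mulmxDr !mulmx1 !mul1mx !mulmxA.
  congr block_mx.
  - by rewrite addrK.
  - by rewrite [v *m u *m v + v]addrC subrr.
  - by rewrite addrC.
have := congr1 determinant E.
rewrite !det_mulmx /P1 /P2 /P3 det_lblock det_ublock det_lblock det_ublock !det1 !mul1r !mulr1.
by move=> ->; rewrite det_mx11 !mxE.
Qed.

Lemma det_rank1 (R : fieldType) n (D : 'M[R]_n) (u : 'cV[R]_n) (v : 'rV[R]_n) : D \in unitmx ->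
  \det (D + u *m v) = \det D * (1 + (v *m invmx D *m u) 0 0).
Proof.
move=> uD.
have -> : D + u *m v = D *m (1%:M + (invmx D *m u) *m v).
  by rewrite mulmxDr mulmx1 !mulmxA mulmxV // mul1mx.
by rewrite det_mulmx det1_rank1 mulmxA.
Qed.

Lemma drazin_facts (R : fieldType) m (A AD : 'M[R]_m) k :
  A ^+ k.+1 * AD = A ^+ k -> AD * A * AD = AD -> A * AD = AD * A ->
  [/\ A ^+ k = AD * A ^+ k.+1, A ^+ k.+1 * A ^+ k.+1 * AD ^+ k.+1 = A ^+ k.+1
    & AD = AD ^+ k.+2 * A ^+ k.+1].
Proof.
move=> h1 h2 h3.
have cA : GRing.comm A AD := h3.
have cAD : GRing.comm AD A := commr_sym cA.
set E := A * AD.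
have EE : E * E = E by rewrite /E -mulrA [AD * (A * AD)]mulrA h2.
have En : forall n, E ^+ n.+1 = E.
  by elim => [|n IH]; [rewrite expr1 | rewrite exprS IH EE].
have ME : A ^+ k.+1 * E = A ^+ k.+1.
  by rewrite /E mulrA -exprSr [A ^+ k.+2]exprS -mulrA h1 -exprS.
split.
- by rewrite (commrX k.+1 cAD) h1.
- by rewrite -mulrA -exprMn_comm // En ME.
- by rewrite exprS -mulrA -exprMn_comm // -h3 En /E mulrA h2.
Qed.


Theorem theorem4p7 (C : numClosedFieldType) (m n k r : nat)
    (A : 'M[C]_m) (B : 'M[C]_(n, m)) (AD : 'M[C]_m) :
  is_index A k ->
  \rank (A ^+ k) = r ->
  is_drazin A k AD ->
  forall (i : 'I_n) (j : 'I_m),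
    (B *m AD) i j =
      (\sum_(alpha : {set 'I_m} | (#|alpha| == r) && (j \in alpha))
          pminor (row_repl (A ^+ k.+1) j (row i (B *m A ^+ k))) alpha) /
      (\sum_(alpha : {set 'I_m} | #|alpha| == r) pminor (A ^+ k.+1) alpha).

Proof.
move=> [hidx _] hr [h1 [h2 h3]] i j.
rewrite mulmxE in h1 h2 h3.
have [eAk eM eAD] := drazin_facts h1 h2 h3.
subst r; rewrite -hidx.
set M := A ^+ k.+1.
move: (mulmx_base M); move: (col_base M) (row_base M) => F G FG.
have Den : \sum_(a : {set 'I_m} | #|a| == \rank M) pminor M a = \det (G *m F).
  by rewrite -sum_pminor_mul FG.
have uGF : G *m F \in unitmx.
  rewrite -row_free_unit /row_free eqn_leq rank_leq_row /=.
  have eM' : M = F *m (G *m F) *m (G *m AD ^+ k.+1).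
    by rewrite !mulmxA FG -[M *m F *m G]mulmxA FG mulmxE eM.
  rewrite {1}eM'; exact: leq_trans (mxrankM_maxl _ _) (mxrankM_maxr _ _).
have d0 : \det (G *m F) != 0 by rewrite -unitfE -unitmxE.
set c := row i (B *m A ^+ k).
set y := row i B *m AD *m F.
have cy : c = y *m G.
  by rewrite /c /y row_mul eAk -mulmxE -(mulmxA _ F G) FG mulmxA.
set S := row_repl M j c.
pose P := M + delta_mx j 0 *m c.
have hP : forall a, pminor P a = pminor M a + (if j \in a then pminor S a else 0).
  move=> a; apply: pminor_lin.
  - by move=> x xj l; rewrite /P !mxE big_ord1 !mxE (negbTE xj) /= mul0r addr0.
  - by move=> x xj l; rewrite /S /row_repl mxE (negbTE xj).
  - by move=> l; rewrite /P /S /row_repl !mxE big_ord1 !mxE !eqxx mul1r.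
have SP : \sum_(a : {set 'I_m} | #|a| == \rank M) pminor P a
    = \det (G *m F + (G *m delta_mx j 0) *m y).
  by rewrite -mulmxA -mulmxDr -sum_pminor_mul mulmxDl -mulmxA -cy FG.
rewrite det_rank1 // in SP.
rewrite (eq_bigr _ (fun a _ => hP a)) big_split /= Den -big_mkcondr in SP.
have Num : \sum_(a : {set 'I_m} | (#|a| == \rank M) && (j \in a)) pminor S a
    = \det (G *m F) * (y *m invmx (G *m F) *m (G *m delta_mx j (0 : 'I_1))) 0 0.
  by apply: (addrI (\det (G *m F))); rewrite SP mulrDr mulr1.
rewrite Num Den mulrAC divff // mul1r mulmxA -colE [RHS]mxE.
have key0 : F *m G *m F *m invmx (G *m F) *m G = F *m G.
  by rewrite -(mulmxA F G F) -(mulmxA F (G *m F)) mulmxV // mulmx1.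
rewrite FG in key0.
have key : AD *m (F *m (invmx (G *m F) *m G)) = AD.
  rewrite !mulmxA {1}eAD -mulmxE.
  have := congr1 (mulmx (AD ^+ k.+2)) key0; rewrite !mulmxA => ->.
  by rewrite mulmxE -eAD.
have key' : row i B *m AD *m F *m invmx (G *m F) *m G = row i B *m AD.
  by rewrite -!mulmxA key.
by rewrite /y key' -row_mul [RHS]mxE.
Qed.
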